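(* Let $R$ be a commutative ring with identity and $M$ a non-zero comultiplication $R$-module. If $G'(M)$ is non-null and connected, then $G'(M)$ has no cut vertex, i.e. there is no vertex $N$ such that $G'(M)$ with $N$ removed is disconnected.
   Context: An $R$-module $M$ is a comultiplication module if for every submodule $N$ of $M$ there is an ideal $I$ of $R$ with $N=\mathrm{Ann}_M(I)$. A submodule $N$ of $M$ is large if $N\cap L\neq 0$ for every non-zero submodule $L$ of $M$. The large sum graph $G'(M)$ has as vertex set the set of all non-zero non-large submodules of $M$, and two distinct vertices $N,K$ are adjacent iff $N+K$ is non-large in $M$. *)

(* Defs.v *)
From HB Require Import structures.
From mathcomp Require Import all_boot all_order all_algebra.
Set Implicit Arguments. Unset Strict Implicit. Unset Printing Implicit Defensive.
Import GRing.Theory.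
Local Open Scope ring_scope.

Section Defs.
Variables (R : comPzRingType) (M : lmodType R).

Definition submodule (N : M -> Prop) : Prop :=
  [/\ N 0, (forall x y, N x -> N y -> N (x + y)) &
      (forall (r : R) x, N x -> N (r *: x))].

Definition ideal (I : R -> Prop) : Prop :=
  [/\ I 0, (forall a b, I a -> I b -> I (a + b)) &
      (forall r a, I a -> I (r * a))].

Definition AnnM (I : R -> Prop) : M -> Prop :=
  fun m => forall r, I r -> r *: m = 0.

Definition comultiplication : Prop :=
  forall N, submodule N -> exists I, ideal I /\ forall m, N m <-> AnnM I m.

Definition nonzero_sub (N : M -> Prop) : Prop := exists x, N x /\ x <> 0.

Definition same_sub (N K : M -> Prop) : Prop := forall x, N x <-> K x.

Definition large (N : M -> Prop) : Prop :=
  forall L, submodule L -> nonzero_sub L -> exists x, [/\ N x, L x & x <> 0].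

Definition sum_sub (N K : M -> Prop) : M -> Prop :=
  fun x => exists a b, [/\ N a, K b & x = a + b].

Definition lsg_vertex (N : M -> Prop) : Prop :=
  [/\ submodule N, nonzero_sub N & ~ large N].

Definition lsg_adj (N K : M -> Prop) : Prop :=
  [/\ lsg_vertex N, lsg_vertex K, ~ same_sub N K & ~ large (sum_sub N K)].

Inductive reach (V : (M -> Prop) -> Prop) : (M -> Prop) -> (M -> Prop) -> Prop :=
  | reach_refl N : V N -> reach V N N
  | reach_step N K L : V N -> V K -> lsg_adj N K -> reach V K L -> reach V N L.

Definition lsg_connected : Prop :=
  forall N K, lsg_vertex N -> lsg_vertex K -> reach lsg_vertex N K.

Definition lsg_nonnull : Prop := exists N K, lsg_adj N K.

Definition lsg_vertex_minus (N : M -> Prop) : (M -> Prop) -> Prop :=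
  fun K => lsg_vertex K /\ ~ same_sub K N.

Definition lsg_cut_vertex (N : M -> Prop) : Prop :=
  lsg_vertex N /\
  exists K L, [/\ lsg_vertex_minus N K, lsg_vertex_minus N L &
                  ~ reach (lsg_vertex_minus N) K L].
End Defs.

(* Main.v *)
Require Import Defs.
From HB Require Import structures.
From mathcomp Require Import all_boot all_order all_algebra.
From Stdlib Require Import Classical FunctionalExtensionality PropExtensionality.
Set Implicit Arguments. Unset Strict Implicit. Unset Printing Implicit Defensive.
Import GRing.Theory.
Local Open Scope ring_scope.

Lemma same_eq (R : comPzRingType) (M : lmodType R) (N K : M -> Prop) :
  same_sub N K -> N = K.
Proof. move=> h; apply: functional_extensionality => x; apply: propositional_extensionality; exact: h. Qed.

Lemma sub0 (R : comPzRingType) (M : lmodType R) (N : M -> Prop) :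
  submodule N -> N 0.
Proof. by case. Qed.
Lemma subD (R : comPzRingType) (M : lmodType R) (N : M -> Prop) x y :
  submodule N -> N x -> N y -> N (x + y).
Proof. by case=> _ h _; apply: h. Qed.
Lemma subZ (R : comPzRingType) (M : lmodType R) (N : M -> Prop) (r : R) x :
  submodule N -> N x -> N (r *: x).
Proof. by case=> _ _ h; apply: h. Qed.
Lemma subN (R : comPzRingType) (M : lmodType R) (N : M -> Prop) x :
  submodule N -> N x -> N (- x).
Proof. by move=> hN hx; rewrite -scaleN1r; apply: subZ. Qed.

Lemma scal_comm (R : comPzRingType) (M : lmodType R) (a b : R) (v : M) :
  a *: (b *: v) = b *: (a *: v).
Proof. by rewrite !scalerA mulrC. Qed.

Lemma nonlarge_mono (R : comPzRingType) (M : lmodType R) (X Y : M -> Prop) :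
  (forall x, X x -> Y x) -> ~ large Y -> ~ large X.
Proof.
move=> hXY nY lX; apply: nY => L hL nzL.
by have [x [Xx Lx nx]] := lX L hL nzL; exists x; split => //; apply: hXY.
Qed.

Lemma nonlarge_elim (R : comPzRingType) (M : lmodType R) (X : M -> Prop) :
  ~ large X -> exists L, [/\ submodule L, nonzero_sub L &
                           forall x, X x -> L x -> x = 0].
Proof.
move=> H; apply: NNPP => C; apply: H => L HL HnL.
apply: NNPP => C2; apply: C; exists L; split=> // x Xx Lx.
by apply: NNPP => nx; apply: C2; exists x; split.
Qed.

Lemma nonlarge_intro (R : comPzRingType) (M : lmodType R) (X L : M -> Prop) :
  submodule L -> nonzero_sub L -> (forall x, X x -> L x -> x = 0) -> ~ large X.
Proof.
move=> hL nzL h lX; have [x [Xx Lx nx]] := lX L hL nzL.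
by apply: nx; apply: h.
Qed.

Lemma sum_submod (R : comPzRingType) (M : lmodType R) (X Y : M -> Prop) :
  submodule X -> submodule Y -> submodule (sum_sub X Y).
Proof.
move=> hX hY; split.
- by exists 0, 0; split; [exact: sub0|exact: sub0|rewrite addr0].
- move=> x y [a [b [Xa Yb ->]]] [a' [b' [Xa' Yb' ->]]].
  exists (a + a'), (b + b'); split; [exact: subD|exact: subD|by rewrite addrACA].
- move=> r x [a [b [Xa Yb ->]]]; exists (r *: a), (r *: b).
  by split; [exact: subZ|exact: subZ|rewrite scalerDr].
Qed.

Lemma sum_mono (R : comPzRingType) (M : lmodType R) (X Y X' Y' : M -> Prop) :
  (forall x, X x -> X' x) -> (forall x, Y x -> Y' x) ->
  forall x, sum_sub X Y x -> sum_sub X' Y' x.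
Proof.
by move=> h1 h2 x [a [b [Xa Yb ->]]]; exists a, b; split; [apply: h1|apply: h2|].
Qed.

Lemma sum_comm (R : comPzRingType) (M : lmodType R) (X Y : M -> Prop) x :
  sum_sub X Y x -> sum_sub Y X x.
Proof. by move=> [a [b [Xa Yb ->]]]; exists b, a; split => //; rewrite addrC. Qed.

Lemma sum_le (R : comPzRingType) (M : lmodType R) (X Y Z : M -> Prop) :
  submodule Z -> (forall x, X x -> Z x) -> (forall x, Y x -> Z x) ->
  forall x, sum_sub X Y x -> Z x.
Proof. by move=> hZ h1 h2 x [a [b [Xa Yb ->]]]; apply: subD => //; auto. Qed.

Lemma sum_l (R : comPzRingType) (M : lmodType R) (X Y : M -> Prop) x :
  submodule Y -> X x -> sum_sub X Y x.
Proof. by move=> hY Xx; exists x, 0; split => //; [exact: sub0|rewrite addr0]. Qed.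

Definition cyc (R : comPzRingType) (M : lmodType R) (y : M) : M -> Prop :=
  fun z => exists c : R, z = c *: y.

Lemma cyc_sub (R : comPzRingType) (M : lmodType R) (y : M) : submodule (cyc y).
Proof.
split.
- by exists 0; rewrite scale0r.
- by move=> a b [c ->] [d ->]; exists (c + d); rewrite scalerDl.
- by move=> r a [c ->]; exists (r * c); rewrite scalerA.
Qed.

Lemma cyc_self (R : comPzRingType) (M : lmodType R) (y : M) : cyc y y.
Proof. by exists 1; rewrite scale1r. Qed.

Lemma cyc_le (R : comPzRingType) (M : lmodType R) (y : M) (N : M -> Prop) :
  submodule N -> N y -> forall z, cyc y z -> N z.
Proof. by move=> hN Ny z [c ->]; apply: subZ. Qed.

Lemma reach_trans (R : comPzRingType) (M : lmodType R) V (A B C : M -> Prop) :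
  reach V A B -> reach V B C -> reach V A C.
Proof.
elim=> [N VN //|N K L VN VK adj _ IH] h.
exact: reach_step VN VK adj (IH h).
Qed.

Lemma reach_V (R : comPzRingType) (M : lmodType R) V (A B : M -> Prop) :
  reach V A B -> V A /\ V B.
Proof. by elim=> [N VN|N K L VN VK _ _ [_ ?]]. Qed.

Lemma adj_sym (R : comPzRingType) (M : lmodType R) (A B : M -> Prop) :
  lsg_adj A B -> lsg_adj B A.
Proof.
case=> vA vB ns nl; split => //.
- by move=> h; apply: ns => x; split => /h.
- by apply: nonlarge_mono nl => x; apply: sum_comm.
Qed.

Lemma reach_sym (R : comPzRingType) (M : lmodType R) V (A B : M -> Prop) :
  reach V A B -> reach V B A.
Proof.
elim=> [N VN|N K L VN VK adj _ IH]; first exact: reach_refl.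
apply: reach_trans IH _.
exact: reach_step VK VN (adj_sym adj) (reach_refl VN).
Qed.

Lemma reach_sum (R : comPzRingType) (M : lmodType R) (N X Y : M -> Prop) :
  lsg_vertex_minus N X -> lsg_vertex_minus N Y -> ~ large (sum_sub X Y) ->
  reach (@lsg_vertex_minus _ M N) X Y.
Proof.
move=> vX vY nl; case: (classic (same_sub X Y)) => h.
  by rewrite -(same_eq h); apply: reach_refl.
apply: (reach_step vX vY _ (reach_refl vY)).
by split => //; [case: vX|case: vY].
Qed.

Definition good (R : comPzRingType) (M : lmodType R) (N A : M -> Prop) :=
  [/\ lsg_vertex A, ~ same_sub A N & ~ large (sum_sub A N)].

Lemma good_minus (R : comPzRingType) (M : lmodType R) (N A : M -> Prop) :
  good N A -> lsg_vertex_minus N A.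
Proof. by case. Qed.

Lemma path_good (R : comPzRingType) (M : lmodType R) (N K L : M -> Prop) :
  reach (@lsg_vertex _ M) K L -> lsg_vertex_minus N K ->
  reach (@lsg_vertex_minus _ M N) K L \/
  exists A, good N A /\ reach (@lsg_vertex_minus _ M N) K A.
Proof.
elim=> [X VX|X K' Y VX VK adj _ IH].
  by move=> vX; left; apply: reach_refl.
move=> vX.
case: (classic (same_sub K' N)) => h.
  right; exists X; split; last exact: reach_refl.
  case: vX => vX nX; split => //.
  case: adj => _ _ _ nl; apply: nonlarge_mono nl.
  by apply: sum_mono => // x /h.
have vK' : lsg_vertex_minus N K' by [].
case: (IH vK') => [r|[A [gA r]]].
  by left; apply: reach_step vX vK' adj r.
by right; exists A; split => //; apply: reach_step vX vK' adj r.
Qed.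

Definition simple_at (R : comPzRingType) (M : lmodType R) (N : M -> Prop) (n0 : M) :=
  [/\ submodule N, N n0, n0 <> 0, (forall y, N y -> exists c, y = c *: n0) &
      (forall y, N y -> y <> 0 -> exists d, n0 = d *: y)].

Definition ess (R : comPzRingType) (M : lmodType R) (A : M -> Prop) (n0 : M) :=
  forall y, A y -> y <> 0 -> exists c : R, n0 = c *: y.

Lemma prime_ann (R : comPzRingType) (M : lmodType R) (N : M -> Prop) n0 (r s : R) :
  simple_at N n0 -> r *: (s *: n0) = 0 -> r *: n0 <> 0 -> s *: n0 = 0.
Proof.
case=> hN Nn0 _ _ hs h0 hr.
have [c hc] := hs _ (subZ r hN Nn0) hr.
rewrite hc scal_comm (scal_comm s r) h0.
by rewrite scaler0.
Qed.

Lemma comult_ann (R : comPzRingType) (M : lmodType R) (A : M -> Prop) (n0 : M) :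
  comultiplication M -> submodule A -> ~ A n0 ->
  exists r : R, (forall y, A y -> r *: y = 0) /\ r *: n0 <> 0.
Proof.
move=> cm hA nA; have [I [HI HA']] := cm A hA.
apply: NNPP => C; apply: nA; apply/HA' => r Ir.
apply: NNPP => rn; apply: C; exists r; split => // y Ay.
by move/HA': Ay => /(_ r Ir).
Qed.

Lemma case_a (R : comPzRingType) (M : lmodType R) (N A B : M -> Prop) n0 :
  comultiplication M -> simple_at N n0 -> submodule A -> submodule B ->
  ~ A n0 -> ~ B n0 -> ~ large (sum_sub A B).
Proof.
move=> cm sN hA hB nA nB.
have [hN Nn0 n0nz gen simp] := sN.
apply: (@nonlarge_intro _ _ _ N) => //; first by exists n0.
move=> x [a [b [Aa Bb ->]]] Nx; apply: NNPP => xnz.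
have [d hd] := simp _ Nx xnz.
have [r [hr rn]] := comult_ann cm hA nA.
have [s [hs sn]] := comult_ann cm hB nB.
apply: sn; apply: (prime_ann (r := r)) sN _ rn.
rewrite hd (scal_comm s d) (scal_comm r d) scalerDr scalerDr (hs b Bb) scaler0 addr0.
by rewrite (scal_comm r s) (hr a Aa) !scaler0.
Qed.

Lemma case_b (R : comPzRingType) (M : lmodType R) (N A B : M -> Prop) n0 :
  simple_at N n0 -> submodule A -> submodule B -> ess A n0 ->
  ~ B n0 -> ~ large (sum_sub B N) -> ~ large (sum_sub A B).
Proof.
move=> sN hA hB eA nB nl.
have [hN Nn0 n0nz gen simp] := sN.
have [L [hL nzL hL0]] := nonlarge_elim nl.
apply: (nonlarge_intro hL nzL) => x [a [b [Aa Bb ->]]] Lx.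
case: (classic (a = 0)) => [a0|anz].
  by apply: hL0 => //; rewrite a0 add0r; apply: sum_l.
have [c hc] := eA _ Aa anz.
have h0 : c *: (a + b) = 0.
  apply: hL0; last exact: subZ.
  by rewrite scalerDr -hc addrC; exists (c *: b), n0; split => //; apply: subZ.
exfalso; apply: nB.
have -> : n0 = - (c *: b) by apply/eqP; rewrite -addr_eq0 hc -scalerDr h0.
by apply: subN => //; apply: subZ.
Qed.

Lemma ess_in (R : comPzRingType) (M : lmodType R) (N A : M -> Prop) n0 (r : R) a :
  simple_at N n0 -> submodule A -> ess A n0 -> A n0 -> r *: n0 <> 0 ->
  A a -> N (r *: a) -> N a.
Proof.
move=> sN hA eA An0 rn Aa Nra.
have [hN Nn0 n0nz gen simp] := sN.
have [c hc] := gen _ Nra.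
have [d hd] := simp _ (subZ r hN Nn0) rn.
have e : r *: (a - (c * d) *: n0) = 0.
  by rewrite scalerDr scalerN -scalerA (scal_comm r c) (scal_comm r d) -hd -hc subrr.
case: (classic (a - (c * d) *: n0 = 0)) => [z0|znz].
  have -> : a = (c * d) *: n0 by apply/eqP; rewrite -subr_eq0 z0.
  exact: subZ.
exfalso; have [e' he'] := eA _ (subD hA Aa (subN hA (subZ (c * d) hA An0))) znz.
by apply: rn; rewrite he' scal_comm e scaler0.
Qed.

Lemma case_c (R : comPzRingType) (M : lmodType R) (N A B : M -> Prop) n0 :
  comultiplication M -> simple_at N n0 -> submodule A -> submodule B ->
  ess A n0 -> ess B n0 -> A n0 -> B n0 -> ~ large A ->
  (forall x, A x -> B x -> N x) -> ~ large (sum_sub A B).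
Proof.
move=> cm sN hA hB eA eB An0 Bn0 nlA hAB.
have [hN Nn0 n0nz gen simp] := sN.
have NA : forall y, N y -> A y by move=> y /gen [c ->]; apply: subZ.
have [L [hL nzL hL0]] := nonlarge_elim nlA.
apply: (nonlarge_intro hL nzL) => x [a [b [Aa Bb ex]]] Lx.
apply: NNPP => xnz.
have ncx : ~ cyc x n0.
  by move=> [e he]; apply: n0nz; apply: hL0 => //; rewrite he; apply: subZ.
have [r [hr rn]] := comult_ann cm (cyc_sub x) ncx.
have rx : r *: x = 0 by apply: hr; apply: cyc_self.
have rab : r *: a = - (r *: b).
  by apply/eqP; rewrite -addr_eq0 -scalerDr -ex rx.
have Nra : N (r *: a).
  apply: hAB; first exact: subZ.
  by rewrite rab; apply: subN => //; apply: subZ.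
have Nrb : N (r *: b).
  have -> : r *: b = - (r *: a) by rewrite rab opprK.
  exact: subN.
have Na := ess_in sN hA eA An0 rn Aa Nra.
have Nb := ess_in sN hB eB Bn0 rn Bb Nrb.
by apply: xnz; apply: hL0 => //; apply: NA; rewrite ex; apply: subD.
Qed.

Lemma reduce (R : comPzRingType) (M : lmodType R) (N A : M -> Prop) n0 :
  simple_at N n0 -> good N A ->
  exists A1, [/\ reach (@lsg_vertex_minus _ M N) A A1, good N A1 &
             ~ A1 n0 \/ (ess A1 n0 /\ A1 n0)].
Proof.
move=> sN gA; have [hN Nn0 n0nz gen simp] := sN.
have [[hA nzA nlA] nsA nlAN] := gA.
case: (classic (exists y, [/\ A y, y <> 0 & ~ cyc y n0])) => [[y [Ay ynz ncy]]|C].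
  have gA1 : good N (cyc y).
    split.
    - split; first exact: cyc_sub.
      + by exists y; split => //; apply: cyc_self.
      + apply: nonlarge_mono nlAN => z /(cyc_le hA Ay) Az; exact: sum_l.
    - by move=> h; apply: ncy; apply/h.
    - by apply: nonlarge_mono nlAN; apply: sum_mono => // z; apply: cyc_le.
  exists (cyc y); split => //; last by left.
  apply: reach_sum; [exact: good_minus|exact: good_minus|].
  apply: nonlarge_mono nlAN => z hz; apply: sum_l => //.
  by apply: (sum_le hA) hz => // w; apply: cyc_le.
have eA : ess A n0.
  move=> y Ay ynz; apply: NNPP => nc; apply: C; exists y; split => //.
exists A; split => //; first by apply: reach_refl; apply: good_minus.
right; split => //.
have [y [Ay ynz]] := nzA; have [c ->] := eA _ Ay ynz; exact: subZ.
Qed.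

Lemma good_reach (R : comPzRingType) (M : lmodType R) (N A B : M -> Prop) :
  comultiplication M -> lsg_vertex N -> good N A -> good N B ->
  reach (@lsg_vertex_minus _ M N) A B.
Proof.
move=> cm vN gA gB.
have [hN nzN nlN] := vN.
case: (classic (exists W, [/\ submodule W, nonzero_sub W,
                 (forall x, W x -> N x) & ~ same_sub W N])).
  move=> [W [hW nzW WN nWN]].
  have [[hA _ _] _ nlA] := gA; have [[hB _ _] _ nlB] := gB.
  have vW : lsg_vertex_minus N W.
    by split => //; split => //; apply: nonlarge_mono nlN.
  apply: (@reach_trans _ _ _ _ W).
    apply: reach_sum => //; first exact: good_minus.
    by apply: nonlarge_mono nlA; apply: sum_mono.
  apply: reach_sum => //; first exact: good_minus.
  apply: nonlarge_mono nlB => x /sum_comm; exact: sum_mono.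
move=> C.
have simpW : forall W, submodule W -> nonzero_sub W -> (forall x, W x -> N x) ->
    same_sub W N.
  by move=> W hW nzW WN; apply: NNPP => ns; apply: C; exists W; split.
have [n0 [Nn0 n0nz]] := nzN.
have sN : simple_at N n0.
  split => //.
  - move=> y Ny; have h := simpW _ (cyc_sub n0) _ (cyc_le hN Nn0).
    have [c hc] : cyc n0 y.
      apply/h; first by exists n0; split => //; apply: cyc_self.
      exact: Ny.
    by exists c.
  - move=> y Ny ynz.
    have h := simpW _ (cyc_sub y) _ (cyc_le hN Ny).
    have [c hc] : cyc y n0.
      by apply/h => //; exists y; split => //; apply: cyc_self.
    by exists c.
have [A1 [rA gA1 tA]] := reduce sN gA.
have [B1 [rB gB1 tB]] := reduce sN gB.
apply: (reach_trans rA); apply: (reach_trans _ (reach_sym rB)).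
have [[hA1 nzA1 nlA1] _ nlA1N] := gA1; have [[hB1 nzB1 nlB1] _ nlB1N] := gB1.
have vA1 := good_minus gA1; have vB1 := good_minus gB1.
case: tA => [nA|[eA An0]]; case: tB => [nB|[eB Bn0]].
- by apply: reach_sum => //; apply: (case_a cm sN).
- apply: reach_sum => //; apply: nonlarge_mono (case_b sN hB1 hA1 eB nA nlA1N).
  by move=> x; apply: sum_comm.
- by apply: reach_sum => //; apply: (case_b sN).
case: (classic (forall x, A1 x -> B1 x -> N x)) => [hAB|nAB].
  by apply: reach_sum => //; apply: (case_c cm sN).
set D := fun x => A1 x /\ B1 x.
have hD : submodule D.
  split; first by split; apply: sub0.
  - by move=> x y [? ?] [? ?]; split; apply: subD.
  - by move=> r x [? ?]; split; apply: subZ.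
have vD : lsg_vertex_minus N D.
  split; first split => //.
  - by exists n0; split => //; split.
  - by apply: nonlarge_mono nlA1 => x [].
  - move=> h; apply: nAB => x Ax Bx; exact/h.
apply: (@reach_trans _ _ _ _ D).
  apply: reach_sum => //; apply: nonlarge_mono nlA1.
  by apply: (sum_le hA1) => // x [].
apply: reach_sum => //; apply: nonlarge_mono nlB1.
by apply: (sum_le hB1) => // x [].
Qed.

Theorem theorem2p9 (R : comPzRingType) (M : lmodType R) :
  (exists m : M, m <> 0) ->
  comultiplication M ->
  lsg_nonnull M ->
  lsg_connected M ->
  ~ (exists N : M -> Prop, lsg_cut_vertex N).
Proof.
move=> _ cm _ conn [N [vN [K [L [vK vL nr]]]]].
apply: nr.
have [vK' _] := vK; have [vL' _] := vL.
case: (path_good (conn K L vK' vL') vK) => [//|[A [gA rKA]]].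
case: (path_good (conn L K vL' vK') vL) => [r|[B [gB rLB]]].
  exact: reach_sym.
apply: (reach_trans rKA); apply: (reach_trans _ (reach_sym rLB)).
exact: good_reach.
Qed.
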